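(* Let $(T_1,T_2,T_3)$ be an associative Clifford extension over $(V,S^0,S^1)$ with $T_1\ne0$. (a) If $\dim V=1$, then there exist a nonzero Euclidean space $\tilde V$ and a $\mathrm{Cl}(\tilde V)$-module $\tilde S^0\oplus\tilde S^1$ such that $(V,S^0,S^1,T_1,T_2,T_3)$ is isomorphic to $(\mathbb R,\tilde V,\tilde V,\tilde S^0,\tilde S^1,\tilde S^1)$, where $\mathbb R$ acts on $\tilde V\oplus\tilde V$ and on $\tilde S^1\oplus\tilde S^1$ by $a\cdot(x,y)=(-ay,ax)$, and both copies of $\tilde V$ act on $\tilde S^0\oplus\tilde S^1$ by the given Clifford action. (b) If $\dim V>1$ and $\dim S^0=2$, then the extension is isomorphic to the model $\mathcal E(\mathbb C,\mathbb C,n)$ for some $n\ge1$. (c) If $\dim V>1$ and $\dim S^0>2$, then the extension is isomorphic to the model $\mathcal E(W,\mathbb H,n)$ for some $n\ge1$ and some real subspace $W\subset\mathbb H$ with $\dim W=\dim V$.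
   Context: All spaces are finite-dimensional real Euclidean. For a Euclidean space $X$, $\mathrm{Cl}(X)$ is the Clifford algebra with $x\cdot x=-|x|^2$; a ''$\mathrm{Cl}(X)$-module $Y\oplus Z$'' is a $\mathbb Z/2$-graded module with $X\cdot Y\subset Z$, $X\cdot Z\subset Y$, $Y\perp Z$, each $x\in X$ acting skew-symmetrically; the action is written $xy$. Let $V\neq0$ be Euclidean and $S^0\oplus S^1$ a nonzero $\mathrm{Cl}(V)$-module. A Clifford extension over $(V,S^0,S^1)$ is a triple of Euclidean spaces $T_1,T_2,T_3$ of equal dimension together with a $\mathrm{Cl}(V)$-module structure on $T_2\oplus T_3$, a $\mathrm{Cl}(S^0)$-module structure on $T_1\oplus T_2$, and a $\mathrm{Cl}(S^1)$-module structure on $T_1\oplus T_3$. It is associative if $(vs^0)t_1=v(s^0t_1)$ for all $v\in V,s^0\in S^0,t_1\in T_1$. An isomorphism of two such data $(V,S^0,S^1,T_1,T_2,T_3)$ is a family of linear isometries of the six spaces intertwining all four Clifford actions. Model extension $\mathcal E(W,\mathbb A,n)$ for $\mathbb A\in\{\mathbb C,\mathbb H\}$, a nonzero real subspace $W\subset\mathbb A$ and $n\ge1$: $V=W$, $S^0=S^1=\mathbb A$, $T_1=T_2=T_3=\mathbb A^n$ (metric $\mathrm{Re}\sum x_i\bar y_i$); for each of the four pairs (acting space $X$, module $Y\oplus Z$) $=(W,S^0\oplus S^1)$, $(S^0,T_1\oplus T_2)$, $(S^1,T_1\oplus T_3)$, $(W,T_2\oplus T_3)$, the action is $x\cdot y=xy$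 for $y\in Y$ and $x\cdot z=-\bar x z$ for $z\in Z$ (left multiplication in $\mathbb A$, coordinatewise on $\mathbb A^n$). *)

(* Defs.v *)
From HB Require Import structures.
From mathcomp Require Import all_boot all_order all_algebra.
From mathcomp Require Import reals.
Set Implicit Arguments. Unset Strict Implicit. Unset Printing Implicit Defensive.
Import Order.TTheory GRing.Theory Num.Theory.
Local Open Scope ring_scope.

(* A finite-dimensional Euclidean space of dimension n is modelled (up to
   isometry) by 'rV[R]_n with the standard inner product. *)
Definition dotv {R : realType} {n : nat} (u v : 'rV[R]_n) : R :=
  \sum_(i < n) u 0 i * v 0 i.

(* Action data of X (dim p) on a graded space Y (dim q) (+) Z (dim r):
   ca0 x : Y -> Z and ca1 x : Z -> Y. *)
Record clact (R : realType) (p q r : nat) := ClAct {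
  ca0 : 'rV[R]_p -> 'rV[R]_q -> 'rV[R]_r ;
  ca1 : 'rV[R]_p -> 'rV[R]_r -> 'rV[R]_q }.

Definition is_clmod {R : realType} {p q r : nat} (m : clact R p q r) : Prop :=
  (forall (a : R) x x' y, ca0 m (a *: x + x') y = a *: ca0 m x y + ca0 m x' y) /\
  (forall (a : R) x y y', ca0 m x (a *: y + y') = a *: ca0 m x y + ca0 m x y') /\
  (forall (a : R) x x' z, ca1 m (a *: x + x') z = a *: ca1 m x z + ca1 m x' z) /\
  (forall (a : R) x z z', ca1 m x (a *: z + z') = a *: ca1 m x z + ca1 m x z') /\
  (forall x y z, dotv (ca0 m x y) z = - dotv y (ca1 m x z)) /\
  (forall x y, ca1 m x (ca0 m x y) = - (dotv x x) *: y) /\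
  (forall x z, ca0 m x (ca1 m x z) = - (dotv x x) *: z).

Record cdata (R : realType) := CData {
  dV : nat; dS0 : nat; dS1 : nat; dT1 : nat; dT2 : nat; dT3 : nat;
  mVS : clact R dV dS0 dS1 ;
  mS0 : clact R dS0 dT1 dT2 ;
  mS1 : clact R dS1 dT1 dT3 ;
  mVT : clact R dV dT2 dT3 }.

(* Clifford extension over (V,S0,S1), including the standing assumptions
   V <> 0 and S0 (+) S1 a nonzero Cl(V)-module. *)
Definition clifford_ext {R : realType} (D : cdata R) : Prop :=
  (0 < dV D)%N /\ (0 < dS0 D + dS1 D)%N /\ is_clmod (mVS D) /\
  dT1 D = dT2 D /\ dT2 D = dT3 D /\
  is_clmod (mS0 D) /\ is_clmod (mS1 D) /\ is_clmod (mVT D).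

Definition associative_ext {R : realType} (D : cdata R) : Prop :=
  forall v s t, ca0 (mS1 D) (ca0 (mVS D) v s) t = ca0 (mVT D) v (ca0 (mS0 D) s t).

Definition lin_isom {R : realType} {n m : nat} (f : 'rV[R]_n -> 'rV[R]_m) : Prop :=
  (forall (a : R) u v, f (a *: u + v) = a *: f u + f v) /\
  (forall u v, dotv (f u) (f v) = dotv u v) /\ bijective f.

Definition intertwines {R : realType} {p q r p' q' r' : nat}
  (fX : 'rV[R]_p -> 'rV[R]_p') (fY : 'rV[R]_q -> 'rV[R]_q') (fZ : 'rV[R]_r -> 'rV[R]_r')
  (m : clact R p q r) (m' : clact R p' q' r') : Prop :=
  (forall x y, fZ (ca0 m x y) = ca0 m' (fX x) (fY y)) /\
  (forall x z, fY (ca1 m x z) = ca1 m' (fX x) (fZ z)).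

Definition cdata_iso {R : realType} (D D' : cdata R) : Prop :=
  exists (fV : 'rV[R]_(dV D) -> 'rV[R]_(dV D'))
         (fS0 : 'rV[R]_(dS0 D) -> 'rV[R]_(dS0 D'))
         (fS1 : 'rV[R]_(dS1 D) -> 'rV[R]_(dS1 D'))
         (fT1 : 'rV[R]_(dT1 D) -> 'rV[R]_(dT1 D'))
         (fT2 : 'rV[R]_(dT2 D) -> 'rV[R]_(dT2 D'))
         (fT3 : 'rV[R]_(dT3 D) -> 'rV[R]_(dT3 D')),
    (lin_isom fV /\ lin_isom fS0 /\ lin_isom fS1 /\ lin_isom fT1 /\ lin_isom fT2
      /\ lin_isom fT3) /\
    [/\ intertwines fV fS0 fS1 (mVS D) (mVS D'),
        intertwines fS0 fT1 fT2 (mS0 D) (mS0 D'),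
        intertwines fS1 fT1 fT3 (mS1 D) (mS1 D')
      & intertwines fV fT2 fT3 (mVT D) (mVT D')].

(* Part (a) target: (R, Vt, Vt, St0, St1, St1); R = 'rV_1 acts by
   a.(x,y) = (-a y, a x), both copies of Vt act by the given action m. *)
Definition scal_act {R : realType} (k : nat) : clact R 1 k k :=
  ClAct (fun (a : 'rV[R]_1) (x : 'rV[R]_k) => a 0 0 *: x)
        (fun (a : 'rV[R]_1) (y : 'rV[R]_k) => - (a 0 0) *: y).

Definition ext_a {R : realType} {k s0 s1 : nat} (m : clact R k s0 s1) : cdata R :=
  @CData R 1 k k s0 s1 s1 (scal_act k) m m (scal_act s1).

Definition cf {R : realType} {d : nat} (q : 'rV[R]_d.+1) (k : nat) : R := q 0 (inord k).
Definition mk2 {R : realType} (a b : R) : 'rV[R]_2 := \row_(i < 2) nth 0 [:: a; b] i.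
Definition mk4 {R : realType} (a b c d : R) : 'rV[R]_4 :=
  \row_(i < 4) nth 0 [:: a; b; c; d] i.

Definition cmul {R : realType} (x y : 'rV[R]_2) : 'rV[R]_2 :=
  mk2 (cf x 0 * cf y 0 - cf x 1 * cf y 1) (cf x 0 * cf y 1 + cf x 1 * cf y 0).
Definition cconj {R : realType} (x : 'rV[R]_2) : 'rV[R]_2 := mk2 (cf x 0) (- cf x 1).

Definition hmul {R : realType} (x y : 'rV[R]_4) : 'rV[R]_4 :=
  mk4 (cf x 0 * cf y 0 - cf x 1 * cf y 1 - cf x 2 * cf y 2 - cf x 3 * cf y 3)
      (cf x 0 * cf y 1 + cf x 1 * cf y 0 + cf x 2 * cf y 3 - cf x 3 * cf y 2)
      (cf x 0 * cf y 2 - cf x 1 * cf y 3 + cf x 2 * cf y 0 + cf x 3 * cf y 1)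
      (cf x 0 * cf y 3 + cf x 1 * cf y 2 - cf x 2 * cf y 1 + cf x 3 * cf y 0).
Definition hconj {R : realType} (x : 'rV[R]_4) : 'rV[R]_4 :=
  mk4 (cf x 0) (- cf x 1) (- cf x 2) (- cf x 3).

(* A^n is coded as 'rV_(n*d) via mxvec/vec_mx (row i = i-th coordinate);
   the standard inner product is Re sum x_i conj(y_i). *)
Definition lmulA {R : realType} {d : nat} (n : nat) (mul : 'rV[R]_d -> 'rV[R]_d -> 'rV[R]_d)
  (x : 'rV[R]_d) (t : 'rV[R]_(n * d)) : 'rV[R]_(n * d) :=
  mxvec (\matrix_(i < n) mul x (row i (vec_mx t))).

(* Model E(W, A, n): the real subspace W of A (dim d) is given by a matrix B
   with orthonormal rows (w = dim W); v in 'rV_w corresponds to v *m B in W. *)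
Definition model {R : realType} {d w : nat} (n : nat)
  (mul : 'rV[R]_d -> 'rV[R]_d -> 'rV[R]_d) (cj : 'rV[R]_d -> 'rV[R]_d)
  (B : 'M[R]_(w, d)) : cdata R :=
  @CData R w d d (n * d) (n * d) (n * d)
    (ClAct (fun v s => mul (v *m B) s) (fun v s => - mul (cj (v *m B)) s))
    (ClAct (fun s t => @lmulA R d n mul s t) (fun s t => - @lmulA R d n mul (cj s) t))
    (ClAct (fun s t => @lmulA R d n mul s t) (fun s t => - @lmulA R d n mul (cj s) t))
    (ClAct (fun v t => @lmulA R d n mul (v *m B) t) (fun v t => - @lmulA R d n mul (cj (v *m B)) t)).

(* Main.v *)
Require Import Defs.
From HB Require Import structures.
From mathcomp Require Import all_boot all_order all_algebra.
From mathcomp Require Import reals.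
From mathcomp Require Import ring lra zify.
Set Implicit Arguments. Unset Strict Implicit. Unset Printing Implicit Defensive.
Import Order.TTheory GRing.Theory Num.Theory.
Local Open Scope ring_scope.
Section Dot.
Variable R : realType.
Implicit Types a : R.

Lemma dotvC n (u v : 'rV[R]_n) : dotv u v = dotv v u.
Proof. by apply: eq_bigr => i _; rewrite mulrC. Qed.

Lemma dotvE n (u v : 'rV[R]_n) : dotv u v = (u *m v^T) 0 0.
Proof. by rewrite !mxE; apply: eq_bigr => i _; rewrite !mxE. Qed.

Lemma dotvDl n (u u' v : 'rV[R]_n) : dotv (u + u') v = dotv u v + dotv u' v.
Proof. by rewrite !dotvE mulmxDl mxE. Qed.
Lemma dotvZl n a (u v : 'rV[R]_n) : dotv (a *: u) v = a * dotv u v.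
Proof. by rewrite !dotvE -scalemxAl mxE. Qed.
Lemma dotvDr n (u u' v : 'rV[R]_n) : dotv v (u + u') = dotv v u + dotv v u'.
Proof. by rewrite dotvC dotvDl !(dotvC v). Qed.
Lemma dotvZr n a (u v : 'rV[R]_n) : dotv v (a *: u) = a * dotv v u.
Proof. by rewrite dotvC dotvZl dotvC. Qed.
Lemma dotvNl n (u v : 'rV[R]_n) : dotv (- u) v = - dotv u v.
Proof. by rewrite -scaleN1r dotvZl mulN1r. Qed.
Lemma dotvNr n (u v : 'rV[R]_n) : dotv v (- u) = - dotv v u.
Proof. by rewrite dotvC dotvNl dotvC. Qed.
Lemma dotvBl n (u u' v : 'rV[R]_n) : dotv (u - u') v = dotv u v - dotv u' v.
Proof. by rewrite dotvDl dotvNl. Qed.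
Lemma dotvBr n (u u' v : 'rV[R]_n) : dotv v (u - u') = dotv v u - dotv v u'.
Proof. by rewrite dotvDr dotvNr. Qed.
Lemma dotv0l n (v : 'rV[R]_n) : dotv 0 v = 0.
Proof. by rewrite dotvE mul0mx mxE. Qed.
Lemma dotv0r n (v : 'rV[R]_n) : dotv v 0 = 0.
Proof. by rewrite dotvC dotv0l. Qed.
Lemma dotv_sumr n I (r : seq I) (P : pred I) (F : I -> 'rV[R]_n) v :
  dotv v (\sum_(i <- r | P i) F i) = \sum_(i <- r | P i) dotv v (F i).
Proof.
elim/big_rec2: _ => [|i y1 y2 _ H]; first exact: dotv0r.
by rewrite dotvDr H.
Qed.
Lemma dotv_suml n I (r : seq I) (P : pred I) (F : I -> 'rV[R]_n) v :
  dotv (\sum_(i <- r | P i) F i) v = \sum_(i <- r | P i) dotv (F i) v.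
Proof. by rewrite dotvC dotv_sumr; apply: eq_bigr => i _; rewrite dotvC. Qed.

Lemma dotv_ge0 n (u : 'rV[R]_n) : 0 <= dotv u u.
Proof. by apply: sumr_ge0 => i _; rewrite -expr2 sqr_ge0. Qed.

Lemma dotv_eq0 n (u : 'rV[R]_n) : dotv u u = 0 -> u = 0.
Proof.
move=> /eqP; rewrite /dotv psumr_eq0 => [/allP H|i _]; last by rewrite -expr2 sqr_ge0.
apply/rowP => i; rewrite mxE; have := H i; rewrite mem_index_enum => /(_ isT).
by rewrite mulf_eq0 orbb => /eqP.
Qed.

Lemma dotv_inj n (u v : 'rV[R]_n) : (forall w, dotv u w = dotv v w) -> u = v.
Proof.
move=> H; apply/eqP; rewrite -subr_eq0; apply/eqP/dotv_eq0.
by rewrite dotvBl H subrr.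
Qed.

Lemma dotv_delta n (i j : 'I_n) : dotv (delta_mx 0 i : 'rV[R]_n) (delta_mx 0 j) = (i == j)%:R.
Proof.
rewrite dotvE mxE (bigD1 i) //= big1 => [|k /negbTE ki]; last first.
  by rewrite !mxE ki andbF mul0r.
by rewrite !mxE !eqxx /= mul1r addr0 eq_sym.
Qed.

Lemma dotv_deltal n (i : 'I_n) (u : 'rV[R]_n) : dotv (delta_mx 0 i) u = u 0 i.
Proof.
rewrite /dotv (bigD1 i) //= big1 => [|k /negbTE ki]; last first.
  by rewrite !mxE ki andbF mul0r.
by rewrite !mxE !eqxx mul1r addr0.
Qed.

Definition linf n m (f : 'rV[R]_n -> 'rV[R]_m) :=
  forall a u v, f (a *: u + v) = a *: f u + f v.

Section Linf.
Variables (n m : nat) (f : 'rV[R]_n -> 'rV[R]_m) (Hf : linf f).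
Lemma linf0 : f 0 = 0.
Proof.
have H := Hf 1 0 0; rewrite scale1r addr0 scale1r in H.
by apply: (addrI (f 0)); rewrite addr0 -H.
Qed.
Lemma linfD u v : f (u + v) = f u + f v.
Proof. by rewrite -{1}[u]scale1r Hf scale1r. Qed.
Lemma linfZ a u : f (a *: u) = a *: f u.
Proof. by rewrite -[a *: u]addr0 Hf linf0 addr0. Qed.
Lemma linfN u : f (- u) = - f u.
Proof. by rewrite -scaleN1r linfZ scaleN1r. Qed.
Lemma linfB u v : f (u - v) = f u - f v.
Proof. by rewrite linfD linfN. Qed.
Lemma linf_sum I (r : seq I) (P : pred I) (F : I -> 'rV[R]_n) :
  f (\sum_(i <- r | P i) F i) = \sum_(i <- r | P i) f (F i).
Proof. by elim/big_rec2: _ => [|i y1 y2 _ H]; rewrite ?linf0 // linfD H. Qed.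
Lemma linf_mx u : f u = u *m lin1_mx f.
Proof.
have E := row_sum_delta u.
rewrite [in RHS]E mulmx_suml [in LHS]E linf_sum; apply: eq_bigr => i _.
rewrite linfZ -scalemxAl -rowE; congr (_ *: _); by apply/rowP => j; rewrite !mxE.
Qed.
End Linf.

Lemma linf_comp n m k (f : 'rV[R]_n -> 'rV[R]_m) (g : 'rV[R]_m -> 'rV[R]_k) :
  linf f -> linf g -> linf (g \o f).
Proof. by move=> Hf Hg a u v /=; rewrite Hf Hg. Qed.

Lemma orthonormal_le r n (Q : 'M[R]_(r, n)) : Q *m Q^T = 1%:M -> (r <= n)%N.
Proof.
move=> H; have : \rank (Q *m Q^T) = r by rewrite H mxrank1.
move=> <-; apply: leq_trans (mxrankM_maxl _ _) (rank_leq_col _).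
Qed.

Lemma exists_ortho r n (Q : 'M[R]_(r, n)) : (r < n)%N ->
  exists x : 'rV[R]_n, dotv x x = 1 /\ forall i, dotv (row i Q) x = 0.
Proof.
move=> rn.
have nz : kermx Q^T != 0.
  rewrite -mxrank_eq0 mxrank_ker subn_eq0 -ltnNge.
  exact: leq_ltn_trans (rank_leq_col _) rn.
have [i Hi] : exists i, row i (kermx Q^T) != 0.
  apply/existsP; apply: contraR nz => /existsPn H; apply/eqP/row_matrixP => i.
  by rewrite row0; apply/eqP/negPn/H.
set y := row i (kermx Q^T) in Hi.
have yK : y *m Q^T = 0 by rewrite /y -row_mul mulmx_ker row0.
have hy : 0 < dotv y y by rewrite lt_def dotv_ge0 andbT; apply: contra Hi => /eqP/dotv_eq0 ->.
exists ((Num.sqrt (dotv y y))^-1 *: y); split.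
  rewrite dotvZl dotvZr mulrA -expr2 exprVn sqr_sqrtr ?dotv_ge0 // mulVf //.
  by rewrite gt_eqF.
move=> j; rewrite dotvZr (dotvC (row j Q)) (dotvE y (row j Q)).
have -> : (y *m (row j Q)^T) 0 0 = (y *m Q^T) 0 j.
  by rewrite !mxE; apply: eq_bigr => k _; rewrite !mxE.
by rewrite yK mxE mulr0.
Qed.

End Dot.
Section Cl.
Variables (R : realType) (p q r : nat) (m : clact R p q r).
Hypothesis Hm : is_clmod m.
Local Notation c0 := (ca0 m).
Local Notation c1 := (ca1 m).

Lemma c0_linl y : linf (fun x => c0 x y).
Proof. by case: Hm => H _ a x x'; rewrite H. Qed.
Lemma c0_linr x : linf (c0 x).
Proof. by case: Hm => _ [H _] a y y'; rewrite H. Qed.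
Lemma c1_linl z : linf (fun x => c1 x z).
Proof. by case: Hm => _ [_ [H _]] a x x'; rewrite H. Qed.
Lemma c1_linr x : linf (c1 x).
Proof. by case: Hm => _ [_ [_ [H _]]] a y y'; rewrite H. Qed.
Lemma c_skew x y z : dotv (c0 x y) z = - dotv y (c1 x z).
Proof. by case: Hm => _ [_ [_ [_ [H _]]]]. Qed.
Lemma c_skew1 x y z : dotv (c1 x z) y = - dotv z (c0 x y).
Proof. by rewrite dotvC (dotvC z) c_skew opprK. Qed.
Lemma c10 x y : c1 x (c0 x y) = - dotv x x *: y.
Proof. by case: Hm => _ [_ [_ [_ [_ [H _]]]]]. Qed.
Lemma c01 x z : c0 x (c1 x z) = - dotv x x *: z.
Proof. by case: Hm => _ [_ [_ [_ [_ [_ H]]]]]. Qed.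

Lemma c10_pol x x' y :
  c1 x (c0 x' y) + c1 x' (c0 x y) = - (2 * dotv x x') *: y.
Proof.
have E := c10 (x + x') y.
rewrite (linfD (c0_linl y)) (linfD (c1_linr _)) !(linfD (c1_linl _)) !c10 in E.
rewrite !dotvDl !dotvDr (dotvC x' x) in E.
apply/rowP => i; move/rowP: E => /(_ i); rewrite !mxE => E.
have -> : (2 : R) = 1 + 1 by [].
lra.
Qed.

Lemma c01_pol x x' z :
  c0 x (c1 x' z) + c0 x' (c1 x z) = - (2 * dotv x x') *: z.
Proof.
have E := c01 (x + x') z.
rewrite (linfD (c1_linl z)) (linfD (c0_linr _)) !(linfD (c0_linl _)) !c01 in E.
rewrite !dotvDl !dotvDr (dotvC x' x) in E.
apply/rowP => i; move/rowP: E => /(_ i); rewrite !mxE => E.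
have -> : (2 : R) = 1 + 1 by [].
lra.
Qed.

Lemma c0_dot x y y' : dotv (c0 x y) (c0 x y') = dotv x x * dotv y y'.
Proof. by rewrite c_skew c10 dotvZr mulNr opprK. Qed.
Lemma c1_dot x z z' : dotv (c1 x z) (c1 x z') = dotv x x * dotv z z'.
Proof. by rewrite c_skew1 c01 dotvZr mulNr opprK. Qed.

Lemma c0_dot_pol x x' y y' :
  dotv (c0 x y) (c0 x' y') + dotv (c0 x' y) (c0 x y') = 2 * dotv x x' * dotv y y'.
Proof.
rewrite (dotvC (c0 x y)) (dotvC (c0 x' y)) !c_skew -opprD -dotvDr dotvC.
by rewrite c10_pol dotvZl mulNr opprK (dotvC x').
Qed.

End Cl.
Section Gen.
Variable R : realType.

Definition dotpres n k (f : 'rV[R]_n -> 'rV[R]_k) := forall u v, dotv (f u) (f v) = dotv u v.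

Lemma lin_isomP n k (f : 'rV[R]_n -> 'rV[R]_k) :
  lin_isom f <-> [/\ linf f, dotpres f & bijective f].
Proof. by split => [[a [b c]]|[a b c]]. Qed.

Lemma lin_isom_comp n k l (f : 'rV[R]_n -> 'rV[R]_k) (g : 'rV[R]_k -> 'rV[R]_l) :
  lin_isom f -> lin_isom g -> lin_isom (g \o f).
Proof.
move=> /lin_isomP [f1 f2 f3] /lin_isomP [g1 g2 g3]; apply/lin_isomP; split.
- exact: linf_comp.
- by move=> u v /=; rewrite g2 f2.
- exact: bij_comp.
Qed.

Lemma lin_isom_inv n k (f : 'rV[R]_n -> 'rV[R]_k) :
  lin_isom f -> exists h, [/\ lin_isom h, cancel f h & cancel h f].
Proof.
move=> /lin_isomP [f1 f2 [h fh hf]]; exists h; split => //; apply/lin_isomP; split.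
- by move=> a u v; apply: (can_inj fh); rewrite f1 !hf.
- by move=> u v; rewrite -f2 !hf.
- by exists f.
Qed.

Lemma lin_isom_id n : lin_isom (@id 'rV[R]_n).
Proof. by apply/lin_isomP; split => //; exists id. Qed.

Definition skewm p q r (m : clact R p q r) :=
  forall x y z, dotv (ca0 m x y) z = - dotv y (ca1 m x z).

Lemma clmod_skew p q r (m : clact R p q r) : is_clmod m -> skewm m.
Proof. by move=> H; exact: c_skew. Qed.

Lemma intertw_from0 p q r p' q' r' (m : clact R p q r) (m' : clact R p' q' r')
  fX fY fZ : skewm m -> skewm m' -> bijective fY -> dotpres fY -> dotpres fZ ->
  (forall x y, fZ (ca0 m x y) = ca0 m' (fX x) (fY y)) ->
  intertwines fX fY fZ m m'.
Proof.
move=> sm sm' [h fh hf] dY dZ H; split => // x z.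
apply: dotv_inj => w; rewrite -[w]hf dY.
rewrite dotvC -[dotv (h w) _]opprK -sm -dZ H sm' opprK dotvC //.
Qed.

Lemma dotpres_mx n k (f : 'rV[R]_n -> 'rV[R]_k) : linf f -> dotpres f ->
  lin1_mx f *m (lin1_mx f)^T = 1%:M.
Proof.
move=> lf df; apply/matrixP => i j.
have -> : (lin1_mx f *m (lin1_mx f)^T) i j = dotv (row i (lin1_mx f)) (row j (lin1_mx f)).
  by rewrite dotvE !mxE; apply: eq_bigr => l _; rewrite !mxE.
have E l : row l (lin1_mx f) = f (delta_mx 0 l).
  by apply/rowP => c; rewrite !mxE.
by rewrite !E df dotv_delta !mxE.
Qed.

Lemma dotpres_le n k (f : 'rV[R]_n -> 'rV[R]_k) : linf f -> dotpres f -> (n <= k)%N.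
Proof. by move=> lf df; apply: orthonormal_le (dotpres_mx lf df). Qed.

Lemma dotpres_bij n (f : 'rV[R]_n -> 'rV[R]_n) : linf f -> dotpres f -> bijective f.
Proof.
move=> lf df; have E := dotpres_mx lf df.
have E' := mulmx1C E.
exists (fun v => v *m (lin1_mx f)^T) => u /=.
  by rewrite (linf_mx lf) -mulmxA E mulmx1.
by rewrite (linf_mx lf) -mulmxA E' mulmx1.
Qed.

Lemma dotpres_isom n (f : 'rV[R]_n -> 'rV[R]_n) : linf f -> dotpres f -> lin_isom f.
Proof. by move=> lf df; apply/lin_isomP; split => //; exact: dotpres_bij. Qed.

Lemma dotpres_inj n k (f : 'rV[R]_n -> 'rV[R]_k) : linf f -> dotpres f -> injective f.
Proof.
move=> lf df u v E; apply/eqP; rewrite -subr_eq0; apply/eqP/dotv_eq0.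
by rewrite -df (linfB lf) E subrr dotv0l.
Qed.

End Gen.
Section Unit.
Variables (R : realType) (p q r : nat) (m : clact R p q r).
Hypothesis Hm : is_clmod m.
Variable x : 'rV[R]_p.
Hypothesis hx : dotv x x = 1.

Lemma c1K y : - ca1 m x (ca0 m x y) = y.
Proof. by rewrite (c10 Hm) hx scaleN1r opprK. Qed.
Lemma c0K z : ca0 m x (- ca1 m x z) = z.
Proof. by rewrite (linfN (c0_linr Hm x)) (c01 Hm) hx scaleN1r opprK. Qed.
Lemma c1N_isom : lin_isom (fun z => - ca1 m x z).
Proof.
apply/lin_isomP; split.
- by move=> a u v; rewrite (c1_linr Hm) opprD scalerN.
- by move=> u v; rewrite dotvNl dotvNr opprK (c1_dot Hm) hx mul1r.
- by exists (ca0 m x) => [z|y]; [exact: c0K | exact: c1K].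
Qed.
Lemma c0_dotpres : dotpres (ca0 m x).
Proof. by move=> u v; rewrite (c0_dot Hm) hx mul1r. Qed.
End Unit.

Lemma dotv_e1 (R : realType) : dotv (delta_mx 0 0 : 'rV[R]_1) (delta_mx 0 0) = 1.
Proof. by rewrite dotv_delta eqxx. Qed.

Lemma rV1E (R : realType) (v : 'rV[R]_1) : v = v 0 0 *: delta_mx 0 0.
Proof. by apply/rowP => i; rewrite ord1 !mxE /= mulr1. Qed.

Lemma scal_skew (R : realType) k : skewm (@scal_act R k).
Proof. by move=> a x z /=; rewrite dotvZl dotvZr mulNr opprK. Qed.

Lemma scal_clmod (R : realType) k : is_clmod (@scal_act R k).
Proof.
rewrite /is_clmod /=; split; [|split; [|split; [|split; [|split; [|split]]]]].
- by move=> a x x' y; apply/rowP => i; rewrite !mxE; ring.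
- by move=> a x y y'; apply/rowP => i; rewrite !mxE; ring.
- by move=> a x x' y; apply/rowP => i; rewrite !mxE; ring.
- by move=> a x y y'; apply/rowP => i; rewrite !mxE; ring.
- by move=> x y z; rewrite dotvZl dotvZr mulNr opprK.
- move=> x y; rewrite scalerA /dotv big_ord1; congr (_ *: _); ring.
- move=> x y; rewrite scalerA /dotv big_ord1; congr (_ *: _); ring.
Qed.

Section PartA.
Variables (R : realType) (m m' N : nat).
Variables (mVS : clact R 1 m m') (mS0 : clact R m N N) (mS1 : clact R m' N N)
  (mVT : clact R 1 N N).
Hypotheses (HVS : is_clmod mVS) (HS0 : is_clmod mS0) (HS1 : is_clmod mS1)
  (HVT : is_clmod mVT).
Hypothesis Hassoc : forall v s t, ca0 mS1 (ca0 mVS v s) t = ca0 mVT v (ca0 mS0 s t).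
Hypothesis Hdim : (0 < m + m')%N.

Let e : 'rV[R]_1 := delta_mx 0 0.

Lemma partA : exists (k s0 s1 : nat) (mm : clact R k s0 s1),
  (0 < k)%N /\ is_clmod mm /\
  cdata_iso (@CData R 1 m m' N N N mVS mS0 mS1 mVT) (ext_a mm).
Proof.
have he : dotv e e = 1 by exact: dotv_e1.
exists m, N, N, mS0; split; [|split => //].
  case: (posnP m) => // m0; exfalso.
  move: Hdim; rewrite m0 add0n => m'0.
  have Z : forall u : 'rV[R]_m, u = 0 by rewrite m0 => u; apply/rowP => -[].
  have := c0K HVS he (delta_mx 0 (Ordinal m'0)).
  rewrite (Z (- _)) (linf0 (c0_linr HVS e)).
  move/rowP => /(_ (Ordinal m'0)); rewrite !mxE eqxx /= => /eqP.
  by rewrite eq_sym oner_eq0.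
rewrite /cdata_iso /=.
exists id, id, (fun z => - ca1 mVS e z), id, id, (fun z => - ca1 mVT e z).
split.
  split; first exact: lin_isom_id.
  split; first exact: lin_isom_id.
  split; first exact: c1N_isom.
  split; first exact: lin_isom_id.
  split; first exact: lin_isom_id.
  exact: c1N_isom.
split.
- apply: intertw_from0; [exact: clmod_skew | exact: scal_skew | by exists id | by [] |
    by case/lin_isomP: (c1N_isom HVS he) |].
  move=> v s /=; rewrite [in LHS](rV1E v) (linfZ (c0_linl HVS s)).
  by rewrite (linfZ (c1_linr HVS _)) -scalerN c1K.
- apply: intertw_from0; [exact: clmod_skew | exact: clmod_skew | by exists id | by [] | by [] |].
  by [].
- apply: intertw_from0; [exact: clmod_skew | exact: clmod_skew | by exists id | by [] |
    by case/lin_isomP: (c1N_isom HVT he) |].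
  move=> s t /=; rewrite -[in LHS](c0K HVS he s) Hassoc /=.
  exact: c1K.
- apply: intertw_from0; [exact: clmod_skew | exact: scal_skew | by exists id | by [] |
    by case/lin_isomP: (c1N_isom HVT he) |].
  move=> v s /=; rewrite [in LHS](rV1E v) (linfZ (c0_linl HVT s)).
  by rewrite (linfZ (c1_linr HVT _)) -scalerN c1K.
Qed.
End PartA.
Lemma dotv_mxvec (R : realType) n d (Y Y' : 'M[R]_(n, d)) :
  dotv (mxvec Y) (mxvec Y') = \sum_(i < n) dotv (row i Y) (row i Y').
Proof.
rewrite /dotv (reindex (uncurry (@mxvec_index n d))) /=; last first.
  exact: curry_mxvec_bij.
rewrite pair_big /=; apply: eq_bigr => -[i j] _ /=.
by rewrite !mxvecE !mxE.
Qed.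

Section GS.
Variables (R : realType) (d N : nat).
Variables (rho : 'rV[R]_d -> 'rV[R]_N -> 'rV[R]_N)
  (mul : 'rV[R]_d -> 'rV[R]_d -> 'rV[R]_d) (cj : 'rV[R]_d -> 'rV[R]_d).
Hypotheses (Hrl : forall t, linf (fun x => rho x t)) (Hrr : forall x, linf (rho x)).
Hypothesis H2 : forall x y t, dotv (rho x t) (rho y t) = dotv x y * dotv t t.
Hypothesis H3 : forall x t t', dotv (rho x t) t' = dotv t (rho (cj x) t').
Hypothesis H4 : forall x y t, rho (mul x y) t = rho x (rho y t).

Definition gTn n (ts : seq 'rV[R]_N) (y : 'rV[R]_(n * d)) : 'rV[R]_N :=
  \sum_(j < n) rho (row j (vec_mx y)) (nth 0 ts j).
Arguments gTn n ts y : clear implicits.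

Definition orth n (ts : seq 'rV[R]_N) := size ts = n /\
  forall (i j : 'I_n) x y, dotv (rho x (nth 0 ts i)) (rho y (nth 0 ts j)) = (i == j)%:R * dotv x y.

Lemma rho0 t : rho 0 t = 0. Proof. exact: (linf0 (Hrl t)). Qed.

Lemma gT_lin n ts : linf (gTn n ts).
Proof.
move=> a u v; rewrite /gTn scaler_sumr -big_split /=; apply: eq_bigr => j _.
rewrite linearP /= linearP /= (Hrl _).
by [].
Qed.

Lemma gT_dot n ts : orth n ts -> dotpres (gTn n ts).
Proof.
move=> [_ o] u v; rewrite /gTn dotv_suml -[u]vec_mxK -[v]vec_mxK dotv_mxvec !vec_mxK.
apply: eq_bigr => i _; rewrite dotv_sumr (bigD1 i) //= big1 => [|j ji].
  by rewrite o eqxx mul1r addr0.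
by rewrite o eq_sym (negbTE ji) mul0r.
Qed.

Lemma gT_mul n ts x y : gTn n ts (@lmulA R d n mul x y) = rho x (gTn n ts y).
Proof.
rewrite /gTn /lmulA mxvecK (linf_sum (Hrr x)); apply: eq_bigr => j _.
by rewrite rowK H4.
Qed.

Lemma gT_single n ts (j : 'I_n) (z : 'rV[R]_d) :
  gTn n ts (mxvec (\matrix_(i < n, c < d) (if i == j then z 0 c else 0))) = rho z (nth 0 ts j).
Proof.
rewrite /gTn mxvecK (bigD1 j) //= big1 => [|i ij].
  rewrite addr0; congr (rho _ _); apply/rowP => c; by rewrite !mxE eqxx.
have -> : row i (\matrix_(i0, c) (if i0 == j then z 0 c else 0)) = 0.
  by apply/rowP => c; rewrite !mxE (negbTE ij).
exact: rho0.
Qed.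

Lemma orth_ext n ts : orth n ts -> (n * d < N)%N -> exists x, orth n.+1 (rcons ts x).
Proof.
move=> o nN; have [x [hx xo]] := exists_ortho (lin1_mx (gTn n ts)) nN.
have xo1 y : dotv (gTn n ts y) x = 0.
  rewrite (linf_mx (@gT_lin n ts)) mulmx_sum_row dotv_suml big1 // => l _.
  by rewrite dotvZl xo mulr0.
have xo2 (j : 'I_n) z : dotv (rho z (nth 0 ts j)) x = 0.
  by rewrite -gT_single xo1.
case: o => sz o.
exists x; split; first by rewrite size_rcons sz.
have nthE (i : 'I_n.+1) : nth 0 (rcons ts x) i =
  if (i < n)%N then nth 0 ts i else x.
  rewrite nth_rcons sz; case: ltnP => // h.
  by have -> : nat_of_ord i == n by rewrite eqn_leq h -ltnS ltn_ord.
move=> i j a b; rewrite !nthE.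
case: (ltnP i n) => hi; case: (ltnP j n) => hj.
- have := o (Ordinal hi) (Ordinal hj) a b; rewrite /= => ->.
  by [].
- rewrite dotvC H3 -H4 dotvC (xo2 (Ordinal hi)).
  rewrite (_ : (i == j) = false) ?mul0r //.
  by apply/negP => /eqP E; move: hi; rewrite E ltnNge hj.
- rewrite H3 -H4 dotvC (xo2 (Ordinal hj)).
  rewrite (_ : (i == j) = false) ?mul0r //.
  by apply/negP => /eqP E; move: hj; rewrite -E ltnNge hi.
- rewrite H2 hx mulr1 (_ : (i == j) = true) ?mul1r //.
  have ie : nat_of_ord i = n by apply/eqP; rewrite eqn_leq hi andbT -ltnS ltn_ord.
  have je : nat_of_ord j = n by apply/eqP; rewrite eqn_leq hj andbT -ltnS ltn_ord.
  by apply/eqP/val_inj; rewrite /= ie je.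
Qed.
End GS.
Arguments gTn {R d N} rho n ts y.
Section GS2.
Variables (R : realType) (d N : nat).
Variables (rho : 'rV[R]_d -> 'rV[R]_N -> 'rV[R]_N)
  (mul : 'rV[R]_d -> 'rV[R]_d -> 'rV[R]_d) (cj : 'rV[R]_d -> 'rV[R]_d).
Hypotheses (Hrl : forall t, linf (fun x => rho x t)) (Hrr : forall x, linf (rho x)).
Hypothesis H2 : forall x y t, dotv (rho x t) (rho y t) = dotv x y * dotv t t.
Hypothesis H3 : forall x t t', dotv (rho x t) t' = dotv t (rho (cj x) t').
Hypothesis H4 : forall x y t, rho (mul x y) t = rho x (rho y t).
Hypothesis d0 : (0 < d)%N.

Lemma gs_exists : exists n ts, orth rho n ts /\ (n * d)%N = N.
Proof.
suff H : forall j n ts, orth rho n ts -> (N - n * d <= j)%N ->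
    exists n ts, orth rho n ts /\ (n * d)%N = N.
  apply: (H N 0%N [::]) => //; last by rewrite mul0n subn0.
  by split => // -[].
elim => [|j IH] n ts o hj.
  have le := dotpres_le (gT_lin Hrl ts) (gT_dot o).
  by exists n, ts; split => //; lia.
have le := dotpres_le (gT_lin Hrl ts) (gT_dot o).
case: (ltngtP (n * d) N) => [lt|gt|eq]; last by exists n, ts.
  have [x o'] := orth_ext Hrl H2 H3 H4 o lt.
  apply: (IH n.+1 (rcons ts x) o').
  have le' := dotpres_le (gT_lin Hrl (rcons ts x)) (gT_dot o').
  rewrite mulSn in le' *; lia.
lia.
Qed.

Lemma gs_iso : exists n (g : 'rV[R]_(n * d) -> 'rV[R]_N),
  [/\ lin_isom g, forall x y, g (@lmulA R d n mul x y) = rho x (g y) & (n * d)%N = N].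
Proof.
have [n [ts [o E]]] := gs_exists.
exists n, (gTn rho n ts); split => //; last exact: gT_mul.
have : forall k (E : k = N) (g : 'rV[R]_k -> 'rV[R]_N), linf g -> dotpres g -> lin_isom g.
  by move=> k Ek g; subst k; exact: dotpres_isom.
by move/(_ _ E); apply; [exact: gT_lin | exact: gT_dot].
Qed.
End GS2.

Lemma lmul_skew (R : realType) d n (mul : 'rV[R]_d -> 'rV[R]_d -> 'rV[R]_d) cj :
  (forall x y z, dotv (mul x y) z = dotv y (mul (cj x) z)) ->
  forall x y z, dotv (@lmulA R d n mul x y) z = dotv y (@lmulA R d n mul (cj x) z).
Proof.
move=> H x y z; rewrite /lmulA -[z]vec_mxK -[y]vec_mxK !dotv_mxvec !vec_mxK.
by apply: eq_bigr => i _; rewrite !rowK H.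
Qed.

Section Alg.
Variable R : realType.

Lemma cf2_0 (a b : R) : cf (mk2 a b) 0 = a. Proof. by rewrite /cf mxE inordK. Qed.
Lemma cf2_1 (a b : R) : cf (mk2 a b) 1 = b. Proof. by rewrite /cf mxE inordK. Qed.
Lemma cf4_0 (a b c d : R) : cf (mk4 a b c d) 0 = a. Proof. by rewrite /cf mxE inordK. Qed.
Lemma cf4_1 (a b c d : R) : cf (mk4 a b c d) 1 = b. Proof. by rewrite /cf mxE inordK. Qed.
Lemma cf4_2 (a b c d : R) : cf (mk4 a b c d) 2 = c. Proof. by rewrite /cf mxE inordK. Qed.
Lemma cf4_3 (a b c d : R) : cf (mk4 a b c d) 3 = d. Proof. by rewrite /cf mxE inordK. Qed.
Definition cfE := (cf2_0, cf2_1, cf4_0, cf4_1, cf4_2, cf4_3).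

Lemma mk2E (x : 'rV[R]_2) : x = mk2 (cf x 0) (cf x 1).
Proof.
apply/rowP => i; rewrite /cf !mxE.
by case: i => -[|[|//]] Hi /=; congr (x 0 _); apply/val_inj; rewrite /= inordK.
Qed.
Lemma mk4E (x : 'rV[R]_4) : x = mk4 (cf x 0) (cf x 1) (cf x 2) (cf x 3).
Proof.
apply/rowP => i; rewrite /cf !mxE.
by case: i => -[|[|[|[|//]]]] Hi /=; congr (x 0 _); apply/val_inj; rewrite /= inordK.
Qed.

Lemma dotv2 (x y : 'rV[R]_2) : dotv x y = cf x 0 * cf y 0 + cf x 1 * cf y 1.
Proof.
rewrite {1}(mk2E x) {1}(mk2E y) /dotv !big_ord_recr big_ord0 /= !mxE /= add0r.
by [].
Qed.
Lemma dotv4 (x y : 'rV[R]_4) : dotv x y =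
  cf x 0 * cf y 0 + cf x 1 * cf y 1 + cf x 2 * cf y 2 + cf x 3 * cf y 3.
Proof.
rewrite {1}(mk4E x) {1}(mk4E y) /dotv !big_ord_recr big_ord0 /= !mxE /= add0r.
by [].
Qed.

Lemma cf_lin d (k : nat) (a : R) (x y : 'rV[R]_d.+1) : cf (a *: x + y) k = a * cf x k + cf y k.
Proof. by rewrite /cf !mxE. Qed.

Lemma cmul_one (x : 'rV[R]_2) : cmul x (mk2 1 0) = x.
Proof. by rewrite [RHS]mk2E /cmul !cfE; congr mk2; ring. Qed.
Lemma hmul_one (x : 'rV[R]_4) : hmul x (mk4 1 0 0 0) = x.
Proof. by rewrite [RHS]mk4E /hmul !cfE; congr mk4; ring. Qed.

Lemma cmul_skew (x y z : 'rV[R]_2) : dotv (cmul x y) z = dotv y (cmul (cconj x) z).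
Proof. by rewrite !dotv2 /cmul /cconj !cfE; ring. Qed.
Lemma hmul_skew (x y z : 'rV[R]_4) : dotv (hmul x y) z = dotv y (hmul (hconj x) z).
Proof. by rewrite !dotv4 /hmul /hconj !cfE; ring. Qed.

End Alg.

Lemma dotpres_isom_eq (R : realType) k n (E : k = n) (g : 'rV[R]_k -> 'rV[R]_n) :
  linf g -> dotpres g -> lin_isom g.
Proof. by subst k; exact: dotpres_isom. Qed.
Section Setting.
Variables (R : realType) (p m m' N : nat).
Variables (mVS : clact R p m m') (mS0 : clact R m N N) (mS1 : clact R m' N N)
  (mVT : clact R p N N).
Hypotheses (HVS : is_clmod mVS) (HS0 : is_clmod mS0) (HS1 : is_clmod mS1)
  (HVT : is_clmod mVT).
Hypothesis Hassoc : forall v s t, ca0 mS1 (ca0 mVS v s) t = ca0 mVT v (ca0 mS0 s t).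
Hypotheses (p0 : (0 < p)%N) (m0 : (0 < m)%N).

Local Notation A0 := (ca0 mVS). Local Notation A1 := (ca1 mVS).
Local Notation B0 := (ca0 mS0). Local Notation B1 := (ca1 mS0).
Local Notation C0 := (ca0 mS1). Local Notation C1 := (ca1 mS1).
Local Notation E0 := (ca0 mVT). Local Notation E1 := (ca1 mVT).

Definition ee : 'rV[R]_p := delta_mx 0 (Ordinal p0).
Definition eps : 'rV[R]_m := delta_mx 0 (Ordinal m0).
Lemma ee_unit : dotv ee ee = 1. Proof. by rewrite dotv_delta eqxx. Qed.
Lemma eps_unit : dotv eps eps = 1. Proof. by rewrite dotv_delta eqxx. Qed.

Definition kk v s := - A1 ee (A0 v s).
Definition phi v := kk v eps.
Definition LL s t := - B1 eps (B0 s t).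

Lemma LL_eps t : LL eps t = t. Proof. exact: (c1K HS0 eps_unit). Qed.
Lemma LL_linr s : linf (LL s).
Proof. by move=> a u v; rewrite /LL (c0_linr HS0) (c1_linr HS0) opprD scalerN. Qed.
Lemma LL_linl t : linf (fun s => LL s t).
Proof. by move=> a u v; rewrite /LL (c0_linl HS0) (c1_linr HS0) opprD scalerN. Qed.
Lemma kk_linl s : linf (fun v => kk v s).
Proof. by move=> a u v; rewrite /kk (c0_linl HVS) (c1_linr HVS) opprD scalerN. Qed.
Lemma kk_linr v : linf (kk v).
Proof. by move=> a u w; rewrite /kk (c0_linr HVS) (c1_linr HVS) opprD scalerN. Qed.
Lemma phi_lin : linf phi.
Proof. exact: kk_linl. Qed.

Lemma B0_dot s s' t : dotv (B0 s t) (B0 s' t) = dotv s s' * dotv t t.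
Proof.
have := c0_dot_pol HS0 s s' t t; rewrite (dotvC (B0 s' t)).
move=> H; apply: (@mulfI _ 2); first by rewrite pnatr_eq0.
by rewrite mulr2n mulrDl mul1r H mulrA.
Qed.
Lemma A0_dot v v' s : dotv (A0 v s) (A0 v' s) = dotv v v' * dotv s s.
Proof.
have := c0_dot_pol HVS v v' s s; rewrite (dotvC (A0 v' s)).
move=> H; apply: (@mulfI _ 2); first by rewrite pnatr_eq0.
by rewrite mulr2n mulrDl mul1r H mulrA.
Qed.

Lemma LL_dot s s' t : dotv (LL s t) (LL s' t) = dotv s s' * dotv t t.
Proof.
by rewrite /LL dotvNl dotvNr opprK (c1_dot HS0) eps_unit mul1r B0_dot.
Qed.

Lemma phi_dot v v' : dotv (phi v) (phi v') = dotv v v'.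
Proof.
by rewrite /phi /kk dotvNl dotvNr opprK (c1_dot HVS) ee_unit mul1r A0_dot eps_unit mulr1.
Qed.

Lemma phi_ee : phi ee = eps.
Proof. exact: (c1K HVS ee_unit). Qed.

Lemma kk_ee s : kk ee s = s.
Proof. exact: (c1K HVS ee_unit). Qed.

Lemma LL_kk v s t : LL (kk v s) t = LL (phi v) (LL s t).
Proof.
have star : forall s' t', - E1 ee (E0 v (B0 s' t')) = B0 (kk v s') t'.
  move=> s' t'; rewrite -Hassoc -[A0 v s'](c0K HVS ee_unit) Hassoc.
  exact: (c1K HVT ee_unit).
have h1 : B0 eps (LL s t) = B0 s t by exact: (c0K HS0 eps_unit).
by rewrite /LL -[in RHS](star eps) h1 star.
Qed.


Lemma LL_LL a b t : dotv a eps = 0 -> LL a (LL b t) = B1 a (B0 b t).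
Proof.
move=> ha.
have E u : B0 a (- B1 eps u) = B0 eps (B1 a u).
  have := c01_pol HS0 a eps u; rewrite ha mulr0 oppr0 scale0r => /eqP.
  by rewrite addr_eq0 => /eqP H; rewrite (linfN (c0_linr HS0 a)) H opprK.
by rewrite {1}/LL E (c1K HS0 eps_unit).
Qed.

Lemma LL_anti a b t : dotv a eps = 0 -> dotv b eps = 0 ->
  LL a (LL b t) + LL b (LL a t) = - (2 * dotv a b) *: t.
Proof. by move=> ha hb; rewrite !LL_LL // (c10_pol HS0). Qed.

Lemma LL_sq a t : dotv a eps = 0 -> LL a (LL a t) = - dotv a a *: t.
Proof.
move=> ha; have := LL_anti t ha ha; move/rowP => H; apply/rowP => i.
move: (H i); rewrite !mxE; lra.
Qed.

Definition refl (s : 'rV[R]_m) := (2 * dotv s eps) *: eps - s.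

Lemma LL_adj s t t' : dotv (LL s t) t' = dotv t (LL (refl s) t').
Proof.
have H1 u y w : dotv (LL u y) w = dotv (B0 u y) (B0 eps w).
  by rewrite /LL dotvNl (c_skew1 HS0) opprK.
rewrite H1 (dotvC t) H1 /refl (linfB (c0_linl HS0 _)) (linfZ (c0_linl HS0 _)).
rewrite dotvBl dotvZl (c0_dot HS0) eps_unit mul1r.
have := c0_dot_pol HS0 s eps t t'.
rewrite (dotvC t' t) (dotvC (B0 s t')) => <-.
by rewrite addrK.
Qed.

Lemma LL_inj (t0 : 'rV[R]_N) : dotv t0 t0 = 1 ->
  forall s s', LL s t0 = LL s' t0 -> s = s'.
Proof.
move=> h0 s s' E; apply/eqP; rewrite -subr_eq0; apply/eqP/dotv_eq0.
have := LL_dot (s - s') (s - s') t0.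
by rewrite h0 mulr1 (linfB (LL_linl t0)) E subrr dotv0l => <-.
Qed.


Section Assembly.
Variables (d : nat) (mul : 'rV[R]_d -> 'rV[R]_d -> 'rV[R]_d) (cj : 'rV[R]_d -> 'rV[R]_d)
  (one : 'rV[R]_d) (gS : 'rV[R]_d -> 'rV[R]_m).
Hypothesis gS_isom : lin_isom gS.
Hypothesis Hone : gS one = eps.
Hypothesis Hmone : forall x, mul x one = x.
Hypothesis Hmul : forall x y t, LL (gS (mul x y)) t = LL (gS x) (LL (gS y) t).
Hypothesis Hcj : forall x, gS (cj x) = refl (gS x).
Hypothesis Hmskew : forall x y z, dotv (mul x y) z = dotv y (mul (cj x) z).
Variables (w : nat) (fV : 'rV[R]_p -> 'rV[R]_w) (B : 'M[R]_(w, d)).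
Hypothesis fV_isom : lin_isom fV.
Hypothesis HB : forall v, gS (fV v *m B) = phi v.
Hypothesis N0 : (0 < N)%N.
Hypothesis d0 : (0 < d)%N.

Lemma assembly : exists n, (0 < n)%N /\
  cdata_iso (@CData R p m m' N N N mVS mS0 mS1 mVT) (model n mul cj B).
Proof.
have /lin_isomP [gSl gSd gSb] := gS_isom.
pose rho x t := LL (gS x) t.
have Hrl t : linf (fun x => rho x t) by exact: linf_comp gSl (LL_linl t).
have Hrr x : linf (rho x) by exact: LL_linr.
have H2 x y t : dotv (rho x t) (rho y t) = dotv x y * dotv t t by rewrite /rho LL_dot gSd.
have H3 x t t' : dotv (rho x t) t' = dotv t (rho (cj x) t') by rewrite /rho LL_adj Hcj.
have H4 x y t : rho (mul x y) t = rho x (rho y t) by exact: Hmul.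
have [n [gT [gT_isom gTm nE]]] := gs_iso Hrl Hrr H2 H3 H4 d0.
have [hS [hS_isom gShS hSgS]] := lin_isom_inv gS_isom.
have [hT [hT_isom gThT hTgT]] := lin_isom_inv gT_isom.
exists n; split.
  by move: N0; rewrite -nE muln_gt0 => /andP[].
set t0 : 'rV[R]_N := delta_mx 0 (Ordinal N0).
have ht0 : dotv t0 t0 = 1 by rewrite dotv_delta eqxx.
have iS1 := c1N_isom HVS ee_unit.
have iT2 := c1N_isom HS0 eps_unit.
have iT3 := c1N_isom HVT ee_unit.
have kkE v s : kk v s = gS (mul (fV v *m B) (hS s)).
  apply: (LL_inj ht0); rewrite LL_kk Hmul HB hSgS //.
have I1 v s : hS (- A1 ee (A0 v s)) = mul (fV v *m B) (hS s).
  by rewrite -/(kk v s) kkE gShS.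
have I2 s t : hT (- B1 eps (B0 s t)) = @lmulA R d n mul (hS s) (hT t).
  apply: (can_inj gThT); rewrite hTgT gTm hTgT /rho hSgS //.
have I3 sg t : hT (- B1 eps (- E1 ee (C0 sg t))) = @lmulA R d n mul (hS (- A1 ee sg)) (hT t).
  by rewrite -[in LHS](c0K HVS ee_unit sg) Hassoc (c1K HVT ee_unit) I2.
have hSeps : hS eps = one by rewrite -Hone gShS.
rewrite /cdata_iso /=.
exists fV, hS, (hS \o (fun z => - A1 ee z)), hT, (hT \o (fun z => - B1 eps z)),
  ((hT \o (fun z => - B1 eps z)) \o (fun z => - E1 ee z)).
have sk1 : skewm (ClAct (fun (v : 'rV[R]_w) s => mul (v *m B) s)
   (fun v s => - mul (cj (v *m B)) s)).
  by move=> x y z /=; rewrite dotvNr opprK Hmskew.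
have sk2 : skewm (ClAct (fun s t => @lmulA R d n mul s t)
   (fun s t => - @lmulA R d n mul (cj s) t)).
  by move=> x y z /=; rewrite dotvNr opprK (lmul_skew Hmskew).
have sk3 : skewm (ClAct (fun (v : 'rV[R]_w) t => @lmulA R d n mul (v *m B) t)
   (fun v t => - @lmulA R d n mul (cj (v *m B)) t)).
  by move=> x y z /=; rewrite dotvNr opprK (lmul_skew Hmskew).
have /lin_isomP [_ hSd hSb] := hS_isom.
have /lin_isomP [_ hTd hTb] := hT_isom.
have /lin_isomP [_ S1d _] := lin_isom_comp iS1 hS_isom.
have /lin_isomP [_ T2d T2b] := lin_isom_comp iT2 hT_isom.
have /lin_isomP [_ T3d _] := lin_isom_comp iT3 (lin_isom_comp iT2 hT_isom).
split.
  do 5 (split; first by [exact: fV_isom | exact: hS_isom | exact: hT_isom |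
     exact: lin_isom_comp | apply: lin_isom_comp => //; exact: lin_isom_comp]).
  apply: lin_isom_comp => //; exact: lin_isom_comp.
split.
- apply: intertw_from0 (clmod_skew HVS) sk1 hSb hSd S1d _.
  by move=> v s /=; rewrite I1.
- apply: intertw_from0 (clmod_skew HS0) sk2 hTb hTd T2d _.
  by move=> s t /=; rewrite I2.
- apply: intertw_from0 (clmod_skew HS1) sk2 hTb hTd T3d _.
  by move=> sg t /=; rewrite I3.
- apply: intertw_from0 (clmod_skew HVT) sk3 T2b T2d T3d _.
  move=> v u /=.
  rewrite -[in LHS](c0K HS0 eps_unit u) -Hassoc I3 /=.
  by rewrite -/(kk v eps) I1 hSeps Hmone.
Qed.
End Assembly.


Section PartB.
Hypothesis p1 : (1 < p)%N.
Hypothesis N0 : (0 < N)%N.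

Definition e1 : 'rV[R]_p := delta_mx 0 (Ordinal p1).
Lemma e1_unit : dotv e1 e1 = 1. Proof. by rewrite dotv_delta eqxx. Qed.
Lemma e1_ee : dotv e1 ee = 0. Proof. by rewrite dotv_delta. Qed.
Definition q1 := phi e1.
Lemma q1_unit : dotv q1 q1 = 1. Proof. by rewrite phi_dot e1_unit. Qed.
Lemma q1_eps : dotv q1 eps = 0. Proof. by rewrite -phi_ee phi_dot e1_ee. Qed.
Lemma eps_q1 : dotv eps q1 = 0. Proof. by rewrite dotvC q1_eps. Qed.

Lemma phi_isom2 : m = 2%N -> lin_isom phi.
Proof.
move=> m2; apply: dotpres_isom_eq; [|exact: phi_lin|exact: phi_dot].
have := dotpres_le phi_lin phi_dot; rewrite m2 => h.
by apply/anti_leq; rewrite h.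
Qed.

Lemma partB : m = 2%N -> exists n, (0 < n)%N /\
  cdata_iso (@CData R p m m' N N N mVS mS0 mS1 mVT)
    (model n (@cmul R) (@cconj R) (1%:M : 'M[R]_2)).
Proof.
move=> m2.
pose gS (x : 'rV[R]_2) := cf x 0 *: eps + cf x 1 *: q1.
have gSl : linf gS.
  move=> a x y; rewrite /gS !cf_lin !scalerDl -!scalerA.
  apply/rowP => i; rewrite !mxE; ring.
have gSd : dotpres gS.
  move=> x y; rewrite /gS dotv2 !dotvDl !dotvDr !dotvZl !dotvZr.
  by rewrite eps_unit q1_unit q1_eps eps_q1; ring.
have gSi : lin_isom gS by apply: dotpres_isom_eq gSl gSd; rewrite m2.
have [hS [hS_isom gShS hSgS]] := lin_isom_inv gSi.
have LLg x v : LL (gS x) v = cf x 0 *: v + cf x 1 *: LL q1 v.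
  by rewrite /gS (linfD (LL_linl v)) !(linfZ (LL_linl v)) LL_eps.
have II v : LL q1 (LL q1 v) = - v.
  by rewrite LL_sq ?q1_eps // q1_unit scaleN1r.
apply: (@assembly _ _ _ (mk2 1 0) gS gSi _ _ _ _ _ _ (hS \o phi)).
- by rewrite /gS !cfE scale1r scale0r addr0.
- exact: cmul_one.
- move=> x y t; rewrite !LLg.
  rewrite (linfD (LL_linr q1)) !(linfZ (LL_linr q1)) II.
  rewrite /cmul !cfE; apply/rowP => i; rewrite !mxE; ring.
- move=> x; rewrite /gS /refl /cconj !cfE.
  rewrite dotvDl !dotvZl eps_unit q1_eps.
  apply/rowP => i; rewrite !mxE; ring.
- exact: cmul_skew.
- apply: lin_isom_comp hS_isom; exact: phi_isom2.
- by move=> v; rewrite mulmx1 /= hSgS.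
- exact: N0.
- by [].
Qed.

Hypothesis m2 : (2 < m)%N.

Let t0 : 'rV[R]_N := delta_mx 0 (Ordinal N0).
Let ht0 : dotv t0 t0 = 1. Proof. by rewrite dotv_delta eqxx. Qed.

Lemma kk_dot v s s' : dotv (kk v s) (kk v s') = dotv v v * dotv s s'.
Proof.
by rewrite /kk dotvNl dotvNr opprK (c1_dot HVS) ee_unit mul1r (c0_dot HVS).
Qed.

Lemma kk_skew v s s' : dotv v ee = 0 -> dotv (kk v s) s' = - dotv s (kk v s').
Proof.
move=> hv; rewrite /kk dotvNl dotvNr opprK (c_skew1 HVS) opprK (dotvC s) (c_skew1 HVS).
have := c0_dot_pol HVS v ee s s'; rewrite hv mulr0 mul0r (dotvC (A0 ee s)).
move=> H; lra.
Qed.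

Lemma kk2 s : kk e1 (kk e1 s) = - s.
Proof.
apply: (LL_inj ht0).
have h := LL_sq (LL s t0) q1_eps.
rewrite (LL_kk e1 (kk e1 s)) (LL_kk e1 s) h.
by rewrite q1_unit scaleN1r (linfN (LL_linl t0)).
Qed.

Lemma partC : exists n (B : 'M[R]_(p, 4)), (0 < n)%N /\ B *m B^T = 1%:M /\
  cdata_iso (@CData R p m m' N N N mVS mS0 mS1 mVT) (model n (@hmul R) (@hconj R) B).
Proof.
pose Q2 : 'M[R]_(2, m) := \matrix_(i < 2, j < m) (if i == 0 :> nat then eps 0 j else q1 0 j).
have [q2 [q2u q2o]] := exists_ortho Q2 m2.
have eps_q2 : dotv eps q2 = 0.
  rewrite -(q2o 0); congr dotv; apply/rowP => j; by rewrite !mxE.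
have q1_q2 : dotv q1 q2 = 0.
  rewrite -(q2o 1); congr dotv; apply/rowP => j; by rewrite !mxE.
pose q3 := kk e1 q2.
have e1ee := e1_ee.
have q3u : dotv q3 q3 = 1 by rewrite kk_dot e1_unit q2u mulr1.
have q3_eps : dotv q3 eps = 0.
  by rewrite kk_skew // -/(phi e1) -/q1 dotvC q1_q2 oppr0.
have q3_q1 : dotv q3 q1 = 0.
  by rewrite kk_skew // /q1 /phi kk2 dotvNr dotvC eps_q2 !oppr0.
have q3_q2 : dotv q3 q2 = 0.
  have := @kk_skew e1 q2 q2 e1_ee; rewrite -/q3 (dotvC q2 q3) => h; lra.
have q2_eps : dotv q2 eps = 0 by rewrite dotvC.
have eps_q3 : dotv eps q3 = 0 by rewrite dotvC.
have q2_q1 : dotv q2 q1 = 0 by rewrite dotvC.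
have q1_q3 : dotv q1 q3 = 0 by rewrite dotvC.
have q2_q3 : dotv q2 q3 = 0 by rewrite dotvC.
have q1u := q1_unit; have q1e := q1_eps; have eq1 := eps_q1; have eu := eps_unit.
pose gS (x : 'rV[R]_4) := cf x 0 *: eps + cf x 1 *: q1 + cf x 2 *: q2 + cf x 3 *: q3.
have gSl : linf gS.
  move=> a x y; rewrite /gS !cf_lin.
  apply/rowP => i; rewrite !mxE; ring.
have gSd : dotpres gS.
  move=> x y; rewrite /gS dotv4 !dotvDl !dotvDr !dotvZl !dotvZr.
  rewrite eu q1u q2u q3u q1e eq1 eps_q2 q2_eps q1_q2 q2_q1 q3_eps eps_q3.
  rewrite q3_q1 q1_q3 q3_q2 q2_q3; ring.
have gS0 : gS (mk4 1 0 0 0) = eps.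
  by rewrite /gS !cfE !scale0r scale1r !addr0.
have gS1 : gS (mk4 0 1 0 0) = q1.
  by rewrite /gS !cfE !scale0r scale1r add0r !addr0.
have gS2 : gS (mk4 0 0 1 0) = q2.
  by rewrite /gS !cfE !scale0r scale1r !add0r addr0.
have gS3 : gS (mk4 0 0 0 1) = q3.
  by rewrite /gS !cfE !scale0r scale1r !add0r.
have m4 : 4%N = m.
  apply/anti_leq; rewrite (dotpres_le gSl gSd) /= leqNgt; apply/negP => h4.
  have [q4 [q4u q4o]] := exists_ortho (lin1_mx gS) h4.
  have q4o' y : dotv (gS y) q4 = 0.
    rewrite (linf_mx gSl) mulmx_sum_row dotv_suml big1 // => l _.
    by rewrite dotvZl q4o mulr0.
  have q4_eps : dotv q4 eps = 0 by rewrite dotvC -gS0 q4o'.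
  have q4_q1 : dotv q4 q1 = 0 by rewrite dotvC -gS1 q4o'.
  have q4_q2 : dotv q4 q2 = 0 by rewrite dotvC -gS2 q4o'.
  have q4_q3 : dotv q4 q3 = 0 by rewrite dotvC -gS3 q4o'.
  pose q5 := kk e1 q4.
  have q5_eps : dotv q5 eps = 0.
    by rewrite kk_skew // -/(phi e1) -/q1 q4_q1 oppr0.
  have q5_q2 : dotv q5 q2 = 0 by rewrite kk_skew // -/q3 q4_q3 oppr0.
  set u := LL q4 t0.
  have a1 := LL_anti t0 q4_eps q2_eps; rewrite q4_q2 mulr0 oppr0 scale0r -/u in a1.
  have a2 := LL_anti u q2_eps q1e; rewrite q2_q1 mulr0 oppr0 scale0r in a2.
  have a3 := LL_anti t0 q5_eps q2_eps; rewrite q5_q2 mulr0 oppr0 scale0r in a3.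
  rewrite /q5 (LL_kk e1 q4 (LL q2 t0)) (LL_kk e1 q4 t0) -/q1 -/u in a3.
  have b1 : LL q4 (LL q2 t0) = - LL q2 u by apply/eqP; rewrite -addr_eq0 a1.
  have b2 : LL q2 (LL q1 u) = - LL q1 (LL q2 u) by apply/eqP; rewrite -addr_eq0 a2.
  rewrite b1 b2 (linfN (LL_linr q1)) -opprD in a3.
  have : dotv (LL q1 (LL q2 u)) (LL q1 (LL q2 u)) = 1.
    by rewrite LL_dot LL_dot /u LL_dot q1u q2u q4u ht0 !mul1r.
  move/eqP: a3; rewrite oppr_eq0 -mulr2n -scaler_nat scaler_eq0 pnatr_eq0 /= => /eqP ->.
  by rewrite dotv0l => /eqP; rewrite eq_sym oner_eq0.
have gSi : lin_isom gS := dotpres_isom_eq m4 gSl gSd.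
have [hS [hS_isom gShS hSgS]] := lin_isom_inv gSi.
have /lin_isomP [hSl hSd _] := hS_isom.
have fl : linf (hS \o phi) := linf_comp phi_lin hSl.
have fd : dotpres (hS \o phi) by move=> u v /=; rewrite hSd phi_dot.
pose B := lin1_mx (hS \o phi).
have LLg x v : LL (gS x) v = cf x 0 *: v + cf x 1 *: LL q1 v + cf x 2 *: LL q2 v
    + cf x 3 *: LL q1 (LL q2 v).
  by rewrite /gS !(linfD (LL_linl v)) !(linfZ (LL_linl v)) LL_eps (LL_kk e1 q2 v).
have II v : LL q1 (LL q1 v) = (-1) *: v by rewrite LL_sq // q1u.
have JJ v : LL q2 (LL q2 v) = (-1) *: v by rewrite LL_sq // q2u.
have JI v : LL q2 (LL q1 v) = (-1) *: LL q1 (LL q2 v).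
  have := LL_anti v q2_eps q1e; rewrite q2_q1 mulr0 oppr0 scale0r scaleN1r.
  by move/eqP; rewrite addr_eq0 => /eqP.
have Hmul x y t : LL (gS (hmul x y)) t = LL (gS x) (LL (gS y) t).
  rewrite !LLg.
  do 4 rewrite ?(linfD (LL_linr _)) ?(linfZ (LL_linr _)) ?II ?JJ ?JI.
  rewrite /hmul !cfE; set b1 := LL q1 t; set b2 := LL q2 t; set b3 := LL q1 b2.
  apply/rowP => i; rewrite !mxE; ring.
have Hcj x : gS (hconj x) = refl (gS x).
  have h0 : dotv (gS x) eps = cf x 0.
    by rewrite /gS !dotvDl !dotvZl eu q1e q2_eps q3_eps; ring.
  rewrite /refl h0 /gS /hconj !cfE; apply/rowP => i; rewrite !mxE; ring.
have HB v : gS (id v *m B) = phi v by rewrite /B -(linf_mx fl) /= hSgS.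
have [n [n0 iso]] := @assembly _ (@hmul R) (@hconj R) (mk4 1 0 0 0) gS gSi gS0
  (@hmul_one R) Hmul Hcj (@hmul_skew R) _ id B (@lin_isom_id R p) HB N0 isT.
exists n, B; split => //; split => //.
exact: dotpres_mx.
Qed.
End PartB.
End Setting.

Theorem mainTheorem10 (R : realType) (D : cdata R) :
  clifford_ext D -> associative_ext D -> (0 < dT1 D)%N ->
  (* (a) *)
  (dV D = 1%N ->
     exists (k s0 s1 : nat) (m : clact R k s0 s1),
       (0 < k)%N /\ is_clmod m /\ cdata_iso D (ext_a m)) /\
  (* (b) *)
  ((1 < dV D)%N -> dS0 D = 2%N ->
     exists n : nat, (0 < n)%N /\ cdata_iso D (model n (@cmul R) (@cconj R) (1%:M : 'M[R]_2))) /\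
  (* (c) *)
  ((1 < dV D)%N -> (2 < dS0 D)%N ->
     exists (n : nat) (B : 'M[R]_(dV D, 4)),
       (0 < n)%N /\ B *m B^T = 1%:M /\ cdata_iso D (model n (@hmul R) (@hconj R) B)).
Proof.
case: D => p m m' N N2 N3 mVS mS0 mS1 mVT.
rewrite /clifford_ext /associative_ext /=.
move=> [p0 [dim [HVS [E12 [E23 [HS0 [HS1 HVT]]]]]]] Hassoc N0.
subst N2 N3.
split; [|split].
- move=> p1; subst p; exact: partA.
- move=> p1 m2.
  have m0 : (0 < m)%N by rewrite m2.
  exact: (partB HVS HS0 HS1 HVT Hassoc p0 m0 p1 N0 m2).
- move=> p1 m2.
  have m0 : (0 < m)%N by apply: ltn_trans m2.
  exact: (partC HVS HS0 HS1 HVT Hassoc p0 m0 p1 N0 m2).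
Qed.
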